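(* Let $\eta>0$, $\alpha\in(0,1)$, $C\ge1$, and run the generalized share algorithm with the mixing rule $\hat p_{j,t}=(1-\alpha)v_{j,t}+\alpha\,w_{j,t}/Z_t$ for $t\ge2$, where $Z_t=\sum_{i=1}^dw_{i,t}$ and the nonnegative weights $w_{j,t}$ (which may depend on the past and current pre-weights) satisfy, for all $j=1,\dots,d$ and all $t\ge1$, $v_{j,t}\le w_{j,t}\le1$ and $C\,w_{j,t+1}\ge w_{j,t}$. Then for all $T\ge1$, all loss vectors $\ell_1,\dots,\ell_T\in[0,1]^d$ and all $u_1,\dots,u_T\in\mathbb R_+^d$, \[ \sum_{t=1}^T\|u_t\|_1\hat p_t^\top\ell_t-\sum_{t=1}^Tu_t^\top\ell_t\le\frac{n(u_1^T)\ln d}{\eta}+\frac{n(u_1^T)\,T\ln C}{\eta}+\frac\eta8\sum_{t=1}^T\|u_t\|_1+\frac{m(u_1^T)}{\eta}\ln\frac{\max_{t\le T}Z_t}{\alpha}+\frac{\sum_{t=2}^T\|u_t\|_1-m(u_1^T)}{\eta}\ln\frac1{1-\alpha}. \]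
   Context: Let $d\ge1$ and $\Delta_d=\{q\in[0,1]^d:\sum_{i=1}^d q_i=1\}$. The generalized share algorithm with learning rate $\eta>0$ and mixing functions $\psi_t:[0,1]^{td}\to\Delta_d$ ($t\ge2$) works as follows: $\hat p_1=v_1=(1/d,\dots,1/d)$. At each round $t=1,2,\dots$ it predicts $\hat p_t=(\hat p_{1,t},\dots,\hat p_{d,t})\in\Delta_d$, observes a loss vector $\ell_t=(\ell_{1,t},\dots,\ell_{d,t})\in[0,1]^d$ (arbitrary), and suffers loss $\hat p_t^\top\ell_t$. It then forms the pre-weights $v_{j,t+1}=\hat p_{j,t}e^{-\eta\ell_{j,t}}/\sum_{i=1}^d\hat p_{i,t}e^{-\eta\ell_{i,t}}$ for $j=1,\dots,d$, sets $v_{t+1}=(v_{1,t+1},\dots,v_{d,t+1})$, and defines $\hat p_{t+1}=\psi_{t+1}(V_{t+1})$ where $V_{t+1}=[v_{i,s}]_{1\le i\le d,1\le s\le t+1}$ is the $d\times(t+1)$ matrix of all pre-weights so far. For $x,y\in\mathbb R_+^d$, $D_{\mathrm{TV}}(x,y)=\sum_{i:\,x_i\ge y_i}(x_i-y_i)$; for $u_1,\dots,u_T\in\mathbb R_+^d$ (with $u_t=(u_{1,t},\dots,u_{d,t})$), $m(u_1^T)=\sum_{t=2}^T D_{\mathrm{TV}}(u_t,u_{t-1})$ and $n(u_1^T)=\sum_{i=1}^d\max_{1\le t\le T}u_{i,t}$. *)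

(* Defs.v *)
From Stdlib Require Import Reals.
Open Scope R_scope.

Fixpoint sumR (n : nat) (f : nat -> R) : R :=
  match n with
  | O => 0
  | S k => sumR k f + f k
  end.

(* maxR1 T f = max_{1 <= t <= T} f t  (0 when T = 0) *)
Fixpoint maxR1 (T : nat) (f : nat -> R) : R :=
  match T with
  | O => 0
  | S k => match k with
           | O => f 1%nat
           | _ => Rmax (maxR1 k f) (f (S k))
           end
  end.

(* vectors of R^d are functions nat -> R restricted to indices 0..d-1 *)
Definition norm1 (d : nat) (x : nat -> R) : R := sumR d (fun i => Rabs (x i)).

Definition dot (d : nat) (x y : nat -> R) : R := sumR d (fun i => x i * y i).

Definition DTV (d : nat) (x y : nat -> R) : R :=
  sumR d (fun i => if Rle_dec (y i) (x i) then x i - y i else 0).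

(* sequences indexed by time t >= 1: u t is the vector u_t *)
(* m(u_1^T) = sum_{t=2}^T D_TV(u_t, u_{t-1}) *)
Definition m_shift (d T : nat) (u : nat -> nat -> R) : R :=
  sumR (T - 1) (fun k => DTV d (u (k + 2)%nat) (u (k + 1)%nat)).

Definition n_max (d T : nat) (u : nat -> nat -> R) : R :=
  sumR d (fun i => maxR1 T (fun t => u t i)).

Definition sumT (T : nat) (f : nat -> R) : R := sumR T (fun k => f (k + 1)%nat).

Definition sumT2 (T : nat) (f : nat -> R) : R := sumR (T - 1) (fun k => f (k + 2)%nat).

(* Main.v *)
Require Import Defs.
From Stdlib Require Import Reals Lra Lia.
From Coquelicot Require Coquelicot.
Open Scope R_scope.

Module Hoeff.
Import Coquelicot.Coquelicot.
Lemma D_pos mu x : 0 <= mu <= 1 -> 0 < 1 - mu + mu * exp x.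
Proof.
intros Hm. pose proof (exp_pos x).
destruct (Rle_lt_dec mu 0).
- assert (mu = 0) by lra. subst. lra.
- assert (0 < mu * exp x) by (apply Rmult_lt_0_compat; lra). lra.
Qed.

Lemma cont_of_der f df x : is_derive f x df -> continuity_pt f x.
Proof.
intros H. apply continuity_pt_filterlim.
apply (ex_derive_continuous f x). exists df. exact H.
Qed.

Lemma g1_nonneg mu c : 0 <= mu <= 1 -> c <= 0 ->
  0 <= mu * exp c / (1 - mu + mu * exp c) - mu - c / 4.
Proof.
intros Hm Hc.
set (g1 := fun x => mu * exp x / (1 - mu + mu * exp x) - mu - x / 4).
set (dg1 := fun x => (mu * exp x * (1 - mu)) / ((1 - mu + mu * exp x) * (1 - mu + mu * exp x)) - 1/4).
assert (Hd : forall x, is_derive g1 x (dg1 x)).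
{ intros x. pose proof (D_pos mu x Hm). unfold g1, dg1. auto_derive. lra. field. lra. }
assert (Hneg : forall x, dg1 x <= 0).
{ intros x. pose proof (D_pos mu x Hm). unfold dg1.
  set (D := 1 - mu + mu * exp x). set (E := mu * exp x).
  assert (E * (1 - mu) * 4 <= D * D).
  { unfold D. fold E. pose proof (Rle_0_sqr ((1-mu) - E)). unfold Rsqr in *. nra. }
  assert (E * (1-mu) / (D*D) <= 1/4).
  { assert (HD : 0 < D) by exact H. assert (0 < D*D) by nra.
    replace (E * (1-mu) / (D*D)) with ((E * (1 - mu) * 4) * / (D*D) * / 4) by (field; lra).
    apply (Rmult_le_reg_r 4). lra.
    replace (E * (1 - mu) * 4 * / (D * D) * / 4 * 4) with ((E * (1 - mu) * 4) * / (D * D)) by (field; lra).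
    replace (1/4*4) with ((D*D) * / (D*D)) by (field; lra).
    apply Rmult_le_compat_r. left; apply Rinv_0_lt_compat; lra. lra. }
  lra. }
destruct (Req_dec c 0) as [->|Hc0].
{ unfold g1. rewrite exp_0. replace (1 - mu + mu * 1) with 1 by ring. lra. }
destruct (MVT_gen g1 c 0 dg1) as [e [He Heq]].
- intros x _. apply Hd.
- intros x _. apply (cont_of_der _ (dg1 x)). apply Hd.
- assert (g1 0 = 0).
  { unfold g1. rewrite exp_0. field_simplify. lra. lra. }
  rewrite Rmin_left in He by lra. rewrite Rmax_right in He by lra.
  pose proof (Hneg e). change (0 <= g1 c).
  assert (0 <= - dg1 e * (0 - c)) by (apply Rmult_le_pos; lra). lra.
Qed.

Lemma hoeff1 (mu s : R) : 0 <= mu <= 1 -> s <= 0 ->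
  ln (1 - mu + mu * exp s) <= s * mu + s * s / 8.
Proof.
intros Hm Hs.
set (g := fun x => ln (1 - mu + mu * exp x) - x * mu - x*x/8).
set (dg := fun x => mu * exp x / (1 - mu + mu * exp x) - mu - x / 4).
assert (Hd : forall x, is_derive g x (dg x)).
{ intros x. pose proof (D_pos mu x Hm). unfold g, dg. auto_derive. lra. field. lra. }
destruct (Req_dec s 0) as [->|Hs0].
{ rewrite exp_0. replace (1 - mu + mu * 1) with 1 by ring. rewrite ln_1. lra. }
destruct (MVT_gen g s 0 dg) as [e [He Heq]].
- intros x _. apply Hd.
- intros x _. apply (cont_of_der _ (dg x)). apply Hd.
- assert (g 0 = 0).
  { unfold g. rewrite exp_0. replace (1 - mu + mu * 1) with 1 by ring. rewrite ln_1. lra. }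
  rewrite Rmin_left in He by lra. rewrite Rmax_right in He by lra.
  pose proof (g1_nonneg mu e Hm (proj2 He)). change (0 <= dg e) in H0.
  assert (0 <= dg e * (0 - s)) by (apply Rmult_le_pos; lra).
  assert (g s <= 0) by lra. unfold g in H2. lra.
Qed.
End Hoeff.
Import Hoeff.

Lemma sumR_ext n f g : (forall i, (i < n)%nat -> f i = g i) -> sumR n f = sumR n g.
Proof. induction n; simpl; intros H; [reflexivity|]. rewrite IHn by (intros; apply H; lia). rewrite H by lia. reflexivity. Qed.

Lemma sumR_le n f g : (forall i, (i < n)%nat -> f i <= g i) -> sumR n f <= sumR n g.
Proof. induction n; simpl; intros H; [lra|]. pose proof (H n ltac:(lia)). pose proof (IHn ltac:(intros; apply H; lia)). lra. Qed.

Lemma sumR_plus n f g : sumR n (fun i => f i + g i) = sumR n f + sumR n g.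
Proof. induction n; simpl; [ring|]. rewrite IHn. ring. Qed.

Lemma sumR_minus n f g : sumR n (fun i => f i - g i) = sumR n f - sumR n g.
Proof. induction n; simpl; [ring|]. rewrite IHn. ring. Qed.

Lemma sumR_scal n c f : sumR n (fun i => c * f i) = c * sumR n f.
Proof. induction n; simpl; [ring|]. rewrite IHn. ring. Qed.

Lemma sumR_const n c : sumR n (fun _ => c) = INR n * c.
Proof. induction n; simpl sumR; [simpl; ring|]. rewrite IHn, S_INR. ring. Qed.

Lemma sumR_swap n m (f : nat -> nat -> R) :
  sumR n (fun i => sumR m (fun j => f i j)) = sumR m (fun j => sumR n (fun i => f i j)).
Proof. induction n; simpl.
- induction m; simpl; [ring|]. rewrite <- IHm. ring.
- rewrite IHn. rewrite <- sumR_plus. reflexivity. Qed.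

Lemma sumR_nonneg n f : (forall i, (i < n)%nat -> 0 <= f i) -> 0 <= sumR n f.
Proof. intros H. replace 0 with (sumR n (fun _ => 0)). apply sumR_le; auto.
rewrite sumR_const; ring. Qed.

Lemma sumR_pos n f : (1 <= n)%nat -> (forall i, (i < n)%nat -> 0 < f i) -> 0 < sumR n f.
Proof. destruct n; [lia|]. intros _ H. simpl.
pose proof (sumR_nonneg n f (fun i Hi => Rlt_le _ _ (H i ltac:(lia)))). pose proof (H n ltac:(lia)). lra. Qed.

Lemma sumR_ge_term n f k : (forall i, (i < n)%nat -> 0 <= f i) -> (k < n)%nat -> f k <= sumR n f.
Proof. induction n; intros H Hk; [lia|]. simpl.
destruct (Nat.eq_dec k n) as [->|Hne].
- pose proof (sumR_nonneg n f (fun i Hi => H i ltac:(lia))). lra.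
- pose proof (IHn (fun i Hi => H i ltac:(lia)) ltac:(lia)). pose proof (H n ltac:(lia)). lra. Qed.

Lemma maxR1_ge T f t : (1 <= t <= T)%nat -> f t <= maxR1 T f.
Proof. induction T; intros Ht; [lia|].
destruct T as [|k].
- simpl. assert (t = 1%nat) by lia. subst. lra.
- change (maxR1 (S (S k)) f) with (Rmax (maxR1 (S k) f) (f (S (S k)))).
  destruct (Nat.eq_dec t (S (S k))) as [->|Hne].
  + apply Rmax_r.
  + eapply Rle_trans; [apply IHT; lia|apply Rmax_l]. Qed.

Lemma exp_convex s x : 0 <= x <= 1 -> exp (s * x) <= 1 - x + x * exp s.
Proof. intros Hx.
pose proof (exp_ineq1_le (- (s*x))). pose proof (exp_ineq1_le (s - s*x)).
pose proof (exp_pos (s*x)).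
assert (E1 : exp (s*x) * exp (- (s*x)) = 1) by (rewrite <- exp_plus; replace (s*x + - (s*x)) with 0 by ring; apply exp_0).
assert (E2 : exp (s*x) * exp (s - s*x) = exp s) by (rewrite <- exp_plus; f_equal; ring).
assert (A1 : exp (s*x) * (1 - s*x) <= 1) by (rewrite <- E1; apply Rmult_le_compat_l; lra).
assert (A2 : exp (s*x) * (1 + (s - s*x)) <= exp s) by (rewrite <- E2; apply Rmult_le_compat_l; lra).
assert (B : (1-x) * (exp (s*x) * (1 - s*x)) + x * (exp (s*x) * (1 + (s - s*x))) <= (1-x) * 1 + x * exp s).
{ apply Rplus_le_compat; apply Rmult_le_compat_l; lra. }
replace ((1-x) * (exp (s*x) * (1 - s*x)) + x * (exp (s*x) * (1 + (s - s*x)))) with (exp (s*x)) in B by ring.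
lra. Qed.
Lemma hoeff_disc d (p l : nat -> R) eta : 0 < eta ->
  (forall i, (i < d)%nat -> 0 <= p i) -> sumR d p = 1 ->
  (forall i, (i < d)%nat -> 0 <= l i <= 1) ->
  0 < sumR d (fun i => p i * exp (- eta * l i)) /\
  ln (sumR d (fun i => p i * exp (- eta * l i))) <= - eta * dot d p l + eta * eta / 8.
Proof.
intros He Hp Hs Hl.
set (mu := dot d p l).
assert (Hmu : 0 <= mu <= 1).
{ unfold mu, dot. split.
  - apply sumR_nonneg. intros i Hi. apply Rmult_le_pos; [apply Hp|apply Hl]; lia.
  - rewrite <- Hs. apply sumR_le. intros i Hi. pose proof (Hp i Hi). pose proof (Hl i Hi).
    rewrite <- (Rmult_1_r (p i)) at 2. apply Rmult_le_compat_l; lra. }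
assert (Hpos : 0 < sumR d (fun i => p i * exp (- eta * l i))).
{ apply Rlt_le_trans with (sumR d (fun i => exp (- eta) * p i)).
  - rewrite sumR_scal, Hs. rewrite Rmult_1_r. apply exp_pos.
  - apply sumR_le. intros i Hi. rewrite Rmult_comm. apply Rmult_le_compat_l; [apply Hp; lia|].
    pose proof (Hl i Hi). destruct (Req_dec (l i) 1) as [E|E].
    + rewrite E, Rmult_1_r. lra.
    + left. apply exp_increasing. nra. }
split; [exact Hpos|].
assert (Hup : sumR d (fun i => p i * exp (- eta * l i)) <= 1 - mu + mu * exp (- eta)).
{ apply Rle_trans with (sumR d (fun i => p i - p i * l i + exp (-eta) * (p i * l i))).
  - apply sumR_le. intros i Hi. pose proof (exp_convex (- eta) (l i) (Hl i Hi)).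
    pose proof (Hp i Hi).
    replace (p i - p i * l i + exp (- eta) * (p i * l i)) with (p i * (1 - l i + l i * exp (- eta))) by ring.
    apply Rmult_le_compat_l; lra.
  - rewrite sumR_plus, sumR_minus, sumR_scal, Hs. unfold mu, dot. lra. }
apply Rle_trans with (ln (1 - mu + mu * exp (- eta))).
- destruct (Rle_lt_or_eq_dec _ _ Hup) as [Hlt|Heq].
  + left. apply ln_increasing; assumption.
  + rewrite Heq. lra.
- pose proof (hoeff1 mu (- eta) Hmu ltac:(lra)). nra.
Qed.
Lemma per_coord (T : nat) (u x y a : nat -> R) (M Ld lC K J : R) :
  (1 <= T)%nat ->
  (forall t, (1 <= t <= T)%nat -> 0 <= u t <= M) ->
  x (S T) <= 0 -> y 1%nat = - Ld -> a 1%nat <= Ld ->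
  (forall t, (1 <= t)%nat -> 0 <= a t) ->
  (forall t, (1 <= t)%nat -> a (S t) <= a t + lC) -> 0 <= lC ->
  (forall t, (2 <= t <= T)%nat -> x t - y t <= J /\ - y t <= K + a t /\ x t <= - a t) ->
  sumR T (fun k => u (S k) * (x (S (S k)) - y (S k))) <=
  M * Ld + M * INR T * lC +
  sumR (T - 1) (fun k => (if Rle_dec (u (S k)) (u (S (S k))) then u (S (S k)) - u (S k) else 0) * K
                          + (u (S (S k)) - (if Rle_dec (u (S k)) (u (S (S k))) then u (S (S k)) - u (S k) else 0)) * J).
Proof.
intros HT Hu Hx Hy1 Ha1 Ha0 HaC HlC Hxy.
set (f := fun k => u (S k) * x (S (S k)) - u (S (S k)) * y (S (S k))).
set (E := fun k => (if Rle_dec (u (S k)) (u (S (S k))) then u (S (S k)) - u (S k) else 0) * K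
                          + (u (S (S k)) - (if Rle_dec (u (S k)) (u (S (S k))) then u (S (S k)) - u (S k) else 0)) * J).
assert (Dec : forall n, sumR (S n) (fun k => u (S k) * (x (S (S k)) - y (S k))) =
                u 1%nat * Ld + sumR n f + u (S n) * x (S (S n))).
{ induction n.
  - simpl. rewrite Hy1. ring.
  - change (sumR (S (S n)) (fun k => u (S k) * (x (S (S k)) - y (S k)))) with
      (sumR (S n) (fun k => u (S k) * (x (S (S k)) - y (S k))) + u (S (S n)) * (x (S (S (S n))) - y (S (S n)))).
    rewrite IHn. simpl sumR. unfold f. ring. }
assert (G : forall n, (S n <= T)%nat ->
   u 1%nat * Ld + sumR n f + (M - u (S n)) * a (S n) <= M * Ld + M * INR n * lC + sumR n E).
{ induction n; intros Hn.
  - simpl. pose proof (Hu 1%nat ltac:(lia)).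
    assert ((M - u 1%nat) * a 1%nat <= (M - u 1%nat) * Ld) by (apply Rmult_le_compat_l; lra). nra.
  - pose proof (IHn ltac:(lia)) as IH. simpl sumR. rewrite S_INR.
    pose proof (Hu (S n) ltac:(lia)) as Hu1. pose proof (Hu (S (S n)) ltac:(lia)) as Hu2.
    destruct (Hxy (S (S n)) ltac:(lia)) as [Hj [Hk Hxa]].
    pose proof (HaC (S n) ltac:(lia)) as Hc.
    assert (Hm : (M - u (S n)) * (a (S (S n)) - a (S n)) <= (M - u (S n)) * lC) by (apply Rmult_le_compat_l; lra).
    assert (Hm2 : 0 <= u (S n) * lC) by (apply Rmult_le_pos; lra).
    unfold f, E. destruct (Rle_dec (u (S n)) (u (S (S n)))) as [Hle|Hlt].
    + assert (P1 : u (S n) * (x (S (S n)) - y (S (S n))) <= u (S n) * J) by (apply Rmult_le_compat_l; lra).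
      assert (P2 : (u (S (S n)) - u (S n)) * (- y (S (S n))) <= (u (S (S n)) - u (S n)) * (K + a (S (S n)))) by (apply Rmult_le_compat_l; lra).
      fold f E. nra.
    + assert (P1 : u (S (S n)) * (x (S (S n)) - y (S (S n))) <= u (S (S n)) * J) by (apply Rmult_le_compat_l; lra).
      assert (P2 : (u (S n) - u (S (S n))) * x (S (S n)) <= (u (S n) - u (S (S n))) * (- a (S (S n)))) by (apply Rmult_le_compat_l; lra).
      fold f E. nra. }
destruct T as [|n]; [lia|].
rewrite Dec. replace (S n - 1)%nat with n by lia. fold E.
pose proof (G n ltac:(lia)).
pose proof (Hu (S n) ltac:(lia)).
assert (0 <= u (S n) * (- x (S (S n)))) by (apply Rmult_le_pos; lra).
assert (0 <= (M - u (S n)) * a (S n)) by (apply Rmult_le_pos; [lra|apply Ha0; lia]).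
assert (0 <= M * lC) by (apply Rmult_le_pos; lra).
rewrite S_INR. nra.
Qed.
Lemma ln_le' x y : 0 < x -> x <= y -> ln x <= ln y.
Proof. intros Hx Hxy. destruct (Rle_lt_or_eq_dec _ _ Hxy) as [H|H].
- left; apply ln_increasing; auto. - subst; lra. Qed.

Lemma ln_divR x y : 0 < x -> 0 < y -> ln (x / y) = ln x - ln y.
Proof. intros. unfold Rdiv. rewrite ln_mult, ln_Rinv; auto with real; try ring.
Qed.

Lemma sumT_S T f : sumT T f = sumR T (fun k => f (S k)).
Proof. unfold sumT. apply sumR_ext. intros. f_equal. lia. Qed.

Lemma sumT2_S T f : sumT2 T f = sumR (T - 1) (fun k => f (S (S k))).
Proof. unfold sumT2. apply sumR_ext. intros. f_equal. lia. Qed.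

Lemma m_shift_S d T u : m_shift d T u = sumR (T - 1) (fun k => DTV d (u (S (S k))) (u (S k))).
Proof. unfold m_shift. apply sumR_ext. intros. f_equal; f_equal; lia. Qed.

Theorem theorem3 (d : nat) (eta alpha C : R) (T : nat)
  (p v w l u : nat -> nat -> R)
  (Hd : (1 <= d)%nat) (Heta : 0 < eta) (Halpha : 0 < alpha < 1) (HC : 1 <= C)
  (HT : (1 <= T)%nat)
  (Hl : forall t i, (1 <= t <= T)%nat -> (i < d)%nat -> 0 <= l t i <= 1)
  (Hu : forall t i, (1 <= t <= T)%nat -> (i < d)%nat -> 0 <= u t i)
  (Hv1 : forall i, (i < d)%nat -> v 1%nat i = 1 / INR d)
  (Hp1 : forall i, (i < d)%nat -> p 1%nat i = v 1%nat i)
  (Hv : forall t j, (1 <= t)%nat -> (j < d)%nat ->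
     v (S t) j = p t j * exp (- eta * l t j) /
                 sumR d (fun i => p t i * exp (- eta * l t i)))
  (Hp : forall t j, (2 <= t)%nat -> (j < d)%nat ->
     p t j = (1 - alpha) * v t j + alpha * w t j / sumR d (w t))
  (Hw0 : forall t j, (1 <= t)%nat -> (j < d)%nat -> 0 <= w t j)
  (Hwv : forall t j, (1 <= t)%nat -> (j < d)%nat -> v t j <= w t j <= 1)
  (HwC : forall t j, (1 <= t)%nat -> (j < d)%nat -> C * w (S t) j >= w t j) :
  sumT T (fun t => norm1 d (u t) * dot d (p t) (l t)) - sumT T (fun t => dot d (u t) (l t))
  <= n_max d T u * ln (INR d) / eta
     + n_max d T u * INR T * ln C / eta
     + eta / 8 * sumT T (fun t => norm1 d (u t))
     + m_shift d T u / eta * ln (maxR1 T (fun t => sumR d (w t)) / alpha)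
     + (sumT2 T (fun t => norm1 d (u t)) - m_shift d T u) / eta * ln (1 / (1 - alpha)).
Proof.
assert (HdR : 0 < INR d) by (apply lt_0_INR; lia).
assert (Inv : forall n, (forall i, (i < d)%nat -> 0 < v (S n) i) /\ sumR d (v (S n)) = 1 /\
                        (forall i, (i < d)%nat -> 0 < p (S n) i) /\ sumR d (p (S n)) = 1).
{ induction n.
  - assert (Hs : sumR d (v 1%nat) = 1).
    { rewrite (sumR_ext d (v 1%nat) (fun _ => 1 / INR d)) by (intros; apply Hv1; auto).
      rewrite sumR_const. field. lra. }
    split; [|split; [|split]].
    + intros i Hi. rewrite Hv1 by auto. apply Rdiv_lt_0_compat; lra.
    + exact Hs.
    + intros i Hi. rewrite Hp1, Hv1 by auto. apply Rdiv_lt_0_compat; lra.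
    + rewrite (sumR_ext d (p 1%nat) (v 1%nat)) by (intros; apply Hp1; auto). exact Hs.
  - destruct IHn as [_ [_ [Hpp Hps]]].
    set (Sn := sumR d (fun i => p (S n) i * exp (- eta * l (S n) i))).
    assert (HS : 0 < Sn).
    { apply sumR_pos; auto. intros i Hi. apply Rmult_lt_0_compat; [apply Hpp; auto|apply exp_pos]. }
    assert (Hvp : forall i, (i < d)%nat -> 0 < v (S (S n)) i).
    { intros i Hi. rewrite Hv by (auto; lia). apply Rdiv_lt_0_compat; [|exact HS].
      apply Rmult_lt_0_compat; [apply Hpp; auto|apply exp_pos]. }
    assert (Hvs : sumR d (v (S (S n))) = 1).
    { rewrite (sumR_ext d (v (S (S n))) (fun i => / Sn * (p (S n) i * exp (- eta * l (S n) i)))).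
      - rewrite sumR_scal. fold Sn. field. lra.
      - intros i Hi. rewrite Hv by (auto; lia). fold Sn. field. lra. }
    set (Z := sumR d (w (S (S n)))).
    assert (HZ : 1 <= Z).
    { rewrite <- Hvs. apply sumR_le. intros i Hi. apply Hwv; auto; lia. }
    split; [exact Hvp|split; [exact Hvs|split]].
    + intros i Hi. rewrite Hp by (auto; lia). fold Z.
      pose proof (Hvp i Hi). pose proof (Hw0 (S (S n)) i ltac:(lia) Hi).
      assert (0 <= alpha * w (S (S n)) i / Z) by (apply Rmult_le_pos; [apply Rmult_le_pos; lra|apply Rlt_le, Rinv_0_lt_compat; lra]).
      assert (0 < (1 - alpha) * v (S (S n)) i) by (apply Rmult_lt_0_compat; lra). lra.
    + rewrite (sumR_ext d (p (S (S n))) (fun i => (1 - alpha) * v (S (S n)) i + (alpha / Z) * w (S (S n)) i)).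
      * rewrite sumR_plus, !sumR_scal, Hvs. fold Z. field. lra.
      * intros i Hi. rewrite Hp by (auto; lia). fold Z. field. lra. }
assert (Hvpos : forall t i, (1 <= t)%nat -> (i < d)%nat -> 0 < v t i).
{ intros [|n] i Ht Hi; [lia|]. apply (proj1 (Inv n)); auto. }
assert (Hppos : forall t i, (1 <= t)%nat -> (i < d)%nat -> 0 < p t i).
{ intros [|n] i Ht Hi; [lia|]. apply (proj1 (proj2 (proj2 (Inv n)))); auto. }
assert (Hpsum : forall t, (1 <= t)%nat -> sumR d (p t) = 1).
{ intros [|n] Ht; [lia|]. apply (proj2 (proj2 (proj2 (Inv n)))). }
assert (Hwpos : forall t i, (1 <= t)%nat -> (i < d)%nat -> 0 < w t i).
{ intros t i Ht Hi. pose proof (Hvpos t i Ht Hi). pose proof (Hwv t i Ht Hi). lra. }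
assert (HZpos : forall t, (1 <= t)%nat -> 0 < sumR d (w t)).
{ intros t Ht. apply sumR_pos; auto. }
set (Zmax := maxR1 T (fun t => sumR d (w t))).
assert (HZmax : forall t, (1 <= t <= T)%nat -> sumR d (w t) <= Zmax).
{ intros t Ht. apply (maxR1_ge T (fun t => sumR d (w t))). auto. }
assert (HZmaxpos : 0 < Zmax).
{ pose proof (HZmax 1%nat ltac:(lia)). pose proof (HZpos 1%nat ltac:(lia)). lra. }
assert (Step : forall t, (1 <= t <= T)%nat ->
   norm1 d (u t) * dot d (p t) (l t) - dot d (u t) (l t) <=
   / eta * sumR d (fun i => u t i * (ln (v (S t) i) - ln (p t i))) + eta / 8 * norm1 d (u t)).
{ intros t Ht.
  destruct (hoeff_disc d (p t) (l t) eta Heta) as [HSpos HSle].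
  - intros i Hi. apply Rlt_le, Hppos; auto; lia.
  - apply Hpsum; lia.
  - intros i Hi. apply Hl; auto.
  - set (Sg := sumR d (fun i => p t i * exp (- eta * l t i))) in *.
    assert (Hln : forall i, (i < d)%nat -> ln (v (S t) i) - ln (p t i) = - eta * l t i - ln Sg).
    { intros i Hi. rewrite Hv by (auto; lia). fold Sg. pose proof (Hppos t i ltac:(lia) Hi).
      rewrite ln_divR, ln_mult, ln_exp; auto.
      - ring.
      - apply exp_pos.
      - apply Rmult_lt_0_compat; auto. apply exp_pos. }
    rewrite (sumR_ext _ _ (fun i => (- eta) * (u t i * l t i) + (- ln Sg) * u t i))
      by (intros i Hi; rewrite Hln by auto; ring).
    rewrite sumR_plus, !sumR_scal.
    assert (HN : norm1 d (u t) = sumR d (u t)).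
    { unfold norm1. apply sumR_ext. intros i Hi. apply Rabs_pos_eq, Hu; auto. }
    rewrite HN. change (sumR d (fun i => u t i * l t i)) with (dot d (u t) (l t)).
    set (U := sumR d (u t)). set (Dl := dot d (u t) (l t)). set (mu := dot d (p t) (l t)) in *.
    assert (HU : 0 <= U) by (apply sumR_nonneg; intros; apply Hu; auto).
    set (L := ln Sg) in *.
    assert (H1 : U * L <= U * (- eta * mu + eta * eta / 8)) by (apply Rmult_le_compat_l; auto).
    assert (H2 : U * L / eta <= U * (- eta * mu + eta * eta / 8) / eta).
    { apply Rmult_le_compat_r; auto. apply Rlt_le, Rinv_0_lt_compat; auto. }
    replace (U * (- eta * mu + eta * eta / 8) / eta) with (- U * mu + eta / 8 * U) in H2 by (field; lra).
    replace (/ eta * (- eta * Dl + - L * U)) with (- Dl - U * L / eta) by (field; lra).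
    lra. }
assert (HCpos : 0 < C) by lra.
set (K := ln (Zmax / alpha)). set (J := ln (1 / (1 - alpha))).
set (E := fun i k => (if Rle_dec (u (S k) i) (u (S (S k)) i) then u (S (S k)) i - u (S k) i else 0) * K
                          + (u (S (S k)) i - (if Rle_dec (u (S k) i) (u (S (S k)) i) then u (S (S k)) i - u (S k) i else 0)) * J).
assert (Coord : forall i, (i < d)%nat ->
  sumR T (fun k => u (S k) i * (ln (v (S (S k)) i) - ln (p (S k) i))) <=
  maxR1 T (fun t => u t i) * ln (INR d) + maxR1 T (fun t => u t i) * INR T * ln C + sumR (T - 1) (E i)).
{ intros i Hi.
  apply (per_coord T (fun t => u t i) (fun t => ln (v t i)) (fun t => ln (p t i)) (fun t => - ln (w t i))
           (maxR1 T (fun t => u t i)) (ln (INR d)) (ln C) K J).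
  - exact HT.
  - intros t Ht. split; [apply Hu; auto|]. apply (maxR1_ge T (fun t => u t i)). auto.
  - rewrite <- ln_1. apply ln_le'. apply Hvpos; auto; lia. pose proof (Hwv (S T) i ltac:(lia) Hi). lra.
  - rewrite Hp1, Hv1 by auto. unfold Rdiv. rewrite Rmult_1_l, ln_Rinv; auto.
  - assert (X : ln (1 / INR d) <= ln (w 1%nat i)).
    { apply ln_le'. apply Rdiv_lt_0_compat; lra. rewrite <- (Hv1 i Hi). apply Hwv; auto. }
    unfold Rdiv in X. rewrite Rmult_1_l, ln_Rinv in X; auto. lra.
  - intros t Ht. assert (X : ln (w t i) <= ln 1). { apply ln_le'. apply Hwpos; auto. apply Hwv; auto. }
    rewrite ln_1 in X. lra.
  - intros t Ht. assert (X : ln (w t i) <= ln (C * w (S t) i)).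
    { apply ln_le'. apply Hwpos; auto. pose proof (HwC t i Ht Hi). lra. }
    rewrite ln_mult in X; [lra|lra|apply Hwpos; auto].
  - rewrite <- ln_1. apply ln_le'; lra.
  - intros t Ht.
    pose proof (Hvpos t i ltac:(lia) Hi). pose proof (Hwpos t i ltac:(lia) Hi).
    pose proof (HZpos t ltac:(lia)). pose proof (HZmax t ltac:(lia)).
    pose proof (Hp t i ltac:(lia) Hi) as Hpe.
    set (Z := sumR d (w t)) in *.
    assert (A1 : 0 <= alpha * w t i / Z) by (apply Rmult_le_pos; [apply Rmult_le_pos; lra|apply Rlt_le, Rinv_0_lt_compat; lra]).
    assert (A2 : 0 <= (1 - alpha) * v t i) by (apply Rmult_le_pos; lra).
    assert (A3 : alpha * w t i / Zmax <= alpha * w t i / Z).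
    { unfold Rdiv. apply Rmult_le_compat_l. apply Rmult_le_pos; lra. apply Rinv_le_contravar; lra. }
    split; [|split].
    + assert (X : ln ((1 - alpha) * v t i) <= ln (p t i)).
      { apply ln_le'. apply Rmult_lt_0_compat; lra. lra. }
      rewrite ln_mult in X by lra. unfold J. unfold Rdiv. rewrite Rmult_1_l, ln_Rinv by lra. lra.
    + assert (X : ln (alpha * w t i / Zmax) <= ln (p t i)).
      { apply ln_le'. apply Rdiv_lt_0_compat; [apply Rmult_lt_0_compat|]; lra. lra. }
      rewrite ln_divR, ln_mult in X by (try apply Rmult_lt_0_compat; lra).
      unfold K. rewrite ln_divR by lra. lra.
    + rewrite Ropp_involutive. apply ln_le'; auto. apply Hwv; auto; lia. }
assert (SR : forall n f c, sumR n (fun i => f i * c) = sumR n f * c).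
{ intros n f c. rewrite <- (Rmult_comm c). rewrite <- sumR_scal. apply sumR_ext. intros; ring. }
assert (Bsum : sumR d (fun i => sumR T (fun k => u (S k) i * (ln (v (S (S k)) i) - ln (p (S k) i)))) <=
   n_max d T u * ln (INR d) + n_max d T u * INR T * ln C +
   (m_shift d T u * K + (sumT2 T (fun t => norm1 d (u t)) - m_shift d T u) * J)).
{ eapply Rle_trans. apply sumR_le. exact Coord.
  rewrite !sumR_plus, !SR. unfold n_max. rewrite sumR_swap.
  rewrite m_shift_S, sumT2_S.
  rewrite (sumR_ext (T - 1) (fun j => sumR d (fun i => E i j))
     (fun k => DTV d (u (S (S k))) (u (S k)) * K + (norm1 d (u (S (S k))) - DTV d (u (S (S k))) (u (S k))) * J)).
  - rewrite sumR_plus, !SR, sumR_minus. lra.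
  - intros k Hk. unfold E. rewrite sumR_plus, !SR, sumR_minus.
    assert (HN : norm1 d (u (S (S k))) = sumR d (u (S (S k)))).
    { unfold norm1. apply sumR_ext. intros i Hi. apply Rabs_pos_eq, Hu; auto; lia. }
    rewrite HN. reflexivity. }
rewrite !sumT_S. rewrite <- sumR_minus.
eapply Rle_trans.
{ apply sumR_le. intros k Hk. apply Step. lia. }
rewrite sumR_plus, sumR_scal, sumR_swap.
assert (/ eta * sumR d (fun i => sumR T (fun k => u (S k) i * (ln (v (S (S k)) i) - ln (p (S k) i)))) <=
        / eta * (n_max d T u * ln (INR d) + n_max d T u * INR T * ln C +
   (m_shift d T u * K + (sumT2 T (fun t => norm1 d (u t)) - m_shift d T u) * J))).
{ apply Rmult_le_compat_l; [apply Rlt_le, Rinv_0_lt_compat; lra|exact Bsum]. }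
rewrite sumR_scal. fold K J.
replace (n_max d T u * ln (INR d) / eta + n_max d T u * INR T * ln C / eta +
   eta / 8 * sumR T (fun k => norm1 d (u (S k))) + m_shift d T u / eta * K +
   (sumT2 T (fun t => norm1 d (u t)) - m_shift d T u) / eta * J)
  with (/ eta * (n_max d T u * ln (INR d) + n_max d T u * INR T * ln C +
   (m_shift d T u * K + (sumT2 T (fun t => norm1 d (u t)) - m_shift d T u) * J)) + eta / 8 * sumR T (fun k => norm1 d (u (S k)))) by (field; lra).
lra.
Qed.
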